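(* Let $n\geq 2$ and $M>2n$ be integers, $\Omega>0$, and let $\omega_q=-\Omega+(q-1)h$, $q=1,\dots,M$, with $h=\frac{2\Omega}{M-1}$. Let $\mu=\sum_{j=1}^n a_j\delta_{y_j}$ with $a_j\in\mathbb C\setminus\{0\}$ and pairwise distinct $y_j\in I(n,\Omega):=\big[-\frac{(n-1)\pi}{2\Omega},\frac{(n-1)\pi}{2\Omega}\big]$, and let $m_{\min}=\min_j|a_j|$. Let $\mathbf Y=[\mu]+\mathbf W$ with $\|\mathbf W\|_\infty<\sigma$. Assume $$\min_{p\neq j}|y_p-y_j|\geq \frac{4.4\pi e}{\Omega}\Big(\frac{\sigma}{m_{\min}}\Big)^{\frac{1}{2n-2}}.$$ Then there is no $\sigma$-admissible measure of $\mathbf Y$ with fewer than $n$ supports, i.e. there is no $k<n$, no $\hat a_1,\dots,\hat a_k\in\mathbb C$ and no $\hat y_1,\dots,\hat y_k\in\mathbb R$ such that $\hat\mu=\sum_{j=1}^k\hat a_j\delta_{\hat y_j}$ satisfies $\|[\hat\mu]-\mathbf Y\|_\infty<\sigma$.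
   Context: For a discrete measure $\nu=\sum_j b_j\delta_{x_j}$ on $\mathbb R$, $\mathcal F\nu(\omega)=\sum_j b_je^{ix_j\omega}$ and $[\nu]=(\mathcal F\nu(\omega_1),\dots,\mathcal F\nu(\omega_M))^T\in\mathbb C^M$. A discrete measure $\hat\mu$ is called a $\sigma$-admissible measure of $\mathbf Y$ if $\|[\hat\mu]-\mathbf Y\|_\infty<\sigma$. *)

(* Defs.v *)
From Stdlib Require Import Reals Lra Lia List.
Open Scope R_scope.

Definition Cx : Type := (R * R)%type.
Definition C0 : Cx := (0, 0).
Definition Cadd (z w : Cx) : Cx := (fst z + fst w, snd z + snd w).
Definition Csub (z w : Cx) : Cx := (fst z - fst w, snd z - snd w).
Definition Cmul (z w : Cx) : Cx :=
  (fst z * fst w - snd z * snd w, fst z * snd w + snd z * fst w).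
Definition Cmod (z : Cx) : R := sqrt (fst z ^ 2 + snd z ^ 2).
Definition Cexpi (t : R) : Cx := (cos t, sin t).

(* A discrete measure nu = sum_{j=1}^k b_j delta_{x_j}, given by k, b, x
   (indices j = 1..k).  Its Fourier transform at omega:
   F nu (omega) = sum_{j=1}^k b_j e^{i x_j omega}. *)
Definition fourier (k : nat) (b : nat -> Cx) (x : nat -> R) (om : R) : Cx :=
  fold_right (fun j acc => Cadd (Cmul (b j) (Cexpi (x j * om))) acc) C0 (seq 1 k).

Definition omega_q (Om : R) (M q : nat) : R :=
  - Om + (INR q - 1) * (2 * Om / (INR M - 1)).

Definition mmin (n : nat) (a : nat -> Cx) : R :=
  fold_right Rmin (Cmod (a 1%nat)) (map (fun j => Cmod (a j)) (seq 1 n)).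

Definition admissible (Om : R) (M : nat) (Y : nat -> Cx) (sigma : R)
  (k : nat) (b : nat -> Cx) (x : nat -> R) : Prop :=
  forall q : nat, (1 <= q <= M)%nat ->
    Cmod (Csub (fourier k b x (omega_q Om M q)) (Y q)) < sigma.

(* Main.v *)
Require Import Defs.
From Stdlib Require Import Reals List.
Open Scope R_scope.
From Stdlib Require Import Lra Lia Psatz Permutation.
Require Coquelicot.Coquelicot.
Import ListNotations.

Module Aux.
Import Coquelicot.Coquelicot.
Open Scope R_scope.

Lemma sin_lb_eq u : sin_lb u = u - u^3/6 + u^5/120 - u^7/5040.
intros. unfold sin_lb, sin_approx, sin_term. simpl sum_f_R0. simpl. field. Qed.
Lemma cos_lb_eq u : cos_lb u = 1 - u^2/2 + u^4/24 - u^6/720.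
intros. unfold cos_lb, cos_approx, cos_term. simpl sum_f_R0. simpl. field. Qed.

Lemma jordan u : 0 <= u <= PI/2 -> 2*u/PI <= sin u.
Proof.
  intros [H0 H1]. pose proof PI2_3_2. pose proof PI_4.
  destruct (Rle_or_lt u 1) as [Hu|Hu].
  - pose proof (SIN u H0 ltac:(lra)) as [Hs _]. rewrite sin_lb_eq in Hs.
    assert (u - u^3/6 <= sin u).
    { eapply Rle_trans; [|exact Hs]. assert (0 <= u^5) by (apply pow_le; lra).
      assert (u^7 = u^5*(u*u)) by ring. assert (u*u <= 1) by nra. nra. }
    apply Rmult_le_reg_r with PI; [lra|].
    replace (2*u/PI*PI) with (2*u) by (field; lra).
    assert (u^3 <= u) by (simpl; nra).
    assert (5*u/6 <= sin u) by lra. nra.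
  - set (v := PI/2 - u).
    assert (Hv : 0 <= v <= PI/2 - 1) by (unfold v; lra).
    replace u with (PI/2 - v) by (unfold v; lra). rewrite sin_shift.
    pose proof (COS v ltac:(lra) ltac:(lra)) as [Hc _]. rewrite cos_lb_eq in Hc.
    assert (1 - v^2/2 <= cos v).
    { eapply Rle_trans; [|exact Hc]. assert (0 <= v^4) by (apply pow_le; lra).
      assert (v^6 = v^4*(v*v)) by ring. assert (v*v <= 1) by nra. nra. }
    apply Rmult_le_reg_r with PI; [lra|].
    replace (2*(PI/2-v)/PI*PI) with (2*(PI/2-v)) by (field; lra).
    assert (v*PI <= 4) by nra. nra.
Qed.

Lemma e_lower : (27/10) <= exp 1.
Proof.
  pose proof (exp_ge_taylor 1 5 ltac:(lra)). simpl in H.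
  unfold Rdiv in H. rewrite !Rmult_1_r, !Rmult_1_l in H. simpl in H.
  eapply Rle_trans; [|exact H]. lra.
Qed.

Lemma exp_pow_nat x k : exp x ^ k = exp (INR k * x).
Proof.
  induction k. simpl. rewrite Rmult_0_l, exp_0. reflexivity.
  rewrite S_INR. simpl. rewrite IHk, <- exp_plus. f_equal. ring.
Qed.

Lemma one_plus_pow_le_e k : (0 < k)%nat -> (1 + 1/INR k)^k <= exp 1.
Proof.
  intros Hk. assert (0 < INR k) by (apply lt_0_INR; lia).
  assert (1 + 1/INR k <= exp (1/INR k)).
  { apply exp_ineq1_le. }
  replace (exp 1) with (exp (1/INR k) ^ k).
  apply pow_incr. split; [|exact H0]. assert (0 < 1/INR k) by (apply Rdiv_lt_0_compat; lra). lra.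
  rewrite exp_pow_nat. f_equal. field. lra.
Qed.

Lemma bern2 k : 1 + (21/100) * INR k + (2205/100000) * INR k * (INR k - 1) <= (121/100) ^ k.
Proof.
  induction k. simpl. lra.
  rewrite S_INR. simpl pow.
  assert (0 <= INR k * (INR k - 1)).
  { destruct k. simpl. lra. rewrite S_INR. pose proof (pos_INR k). nra. }
  nra.
Qed.

Lemma factC k : (1 <= k)%nat -> (11/10)^k * exp 1 * INR k ^ k <= ((11/10) * exp 1)^k * INR (Factorial.fact k).
Proof.
  intros Hk. induction k. lia.
  destruct k. simpl. lra.
  specialize (IHk ltac:(lia)).
  assert (Hkpos : 0 < INR (S k)) by (apply lt_0_INR; lia).
  pose proof (one_plus_pow_le_e (S k) ltac:(lia)) as He.
  assert (Hq : INR (S (S k)) ^ (S k) = INR (S k) ^ (S k) * (1 + 1/INR (S k))^(S k)).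
  { rewrite <- Rpow_mult_distr. f_equal. rewrite (S_INR (S k)). field. lra. }
  replace (Factorial.fact (S (S k))) with (S (S k) * Factorial.fact (S k))%nat by reflexivity.
  rewrite mult_INR.
  replace (INR (S (S k)) ^ S (S k)) with (INR (S (S k)) * INR (S (S k)) ^ (S k)) by reflexivity.
  rewrite Hq.
  replace ((11/10) ^ S (S k)) with ((11/10) * (11/10)^(S k)) by reflexivity.
  replace (((11/10) * exp 1) ^ S (S k)) with (((11/10) * exp 1) * ((11/10) * exp 1)^(S k)) by reflexivity.
  pose proof (exp_pos 1).
  assert (0 <= INR (S k) ^ S k) by (apply pow_le; lra).
  assert (0 < INR (S (S k))) by (apply lt_0_INR; lia).
  assert (0 <= (11/10) ^ S k) by (apply pow_le; lra).
  set (A := ((11/10) * exp 1)^(S k) * INR (Factorial.fact (S k))) in *.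
  set (P := INR (S k) ^ S k) in *. set (Q := (1 + 1 / INR (S k)) ^ S k) in *.
  set (B := (11/10) ^ S k) in *. set (K := INR (S (S k))) in *. set (e := exp 1) in *.
  assert (B*e*P*Q <= B*e*P*e).
  { apply Rmult_le_compat_l; [|exact He]. apply Rmult_le_pos; [apply Rmult_le_pos|]; lra. }
  assert (B*e*P*e <= A*e) by (apply Rmult_le_compat_r; lra).
  assert ((11/10) * B * e * (K * (P * Q)) = (11/10)*K*(B*e*P*Q)) by ring.
  assert ((11/10) * e * A * K = (11/10)*K*(A*e)) by ring.
  rewrite H5.
  replace ((11/10) * e * ((11/10) * e) ^ S k * (K * INR (Factorial.fact (S k)))) with ((11/10)*K*(A*e)) by (unfold A; ring).
  apply Rmult_le_compat_l. lra. lra.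
Qed.

Lemma pow_div_nat a b k : b <> 0 -> (a/b)^k = a^k / b^k.
Proof. intros Hb. induction k. simpl. field. simpl. rewrite IHk. field. split; auto. apply pow_nonzero; auto. Qed.

Lemma final_num k : (1 <= k)%nat ->
  2 * INR (k+1) * 4^k <= ((22/10) * exp 1 / INR k)^(2*k) * (INR (Factorial.fact k))^2.
Proof.
  intros Hk. pose proof (factC k Hk) as F.
  assert (Hkp : 0 < INR k) by (apply lt_0_INR; lia).
  assert (Hkk : 0 < INR k ^ k) by (apply pow_lt; lra).
  pose proof e_lower as E.
  assert (X : 2^k * (11/10)^k * exp 1 <= ((22/10) * exp 1 / INR k)^k * INR (Factorial.fact k)).
  { replace ((22/10) * exp 1 / INR k) with ((2 * ((11/10) * exp 1)) / INR k) by (field; lra).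
    rewrite (pow_div_nat (2 * ((11/10) * exp 1))) by lra. rewrite (Rpow_mult_distr 2).
    assert (0 < 2^k) by (apply pow_lt; lra).
    apply Rmult_le_reg_r with (INR k ^ k). lra.
    replace (2 ^ k * ((11/10) * exp 1) ^ k / INR k ^ k * INR (Factorial.fact k) * INR k ^ k)
      with (2^k * (((11/10) * exp 1) ^ k * INR (Factorial.fact k))) by (field; lra).
    replace (2 ^ k * (11/10) ^ k * exp 1 * INR k ^ k) with (2^k * ((11/10) ^ k * exp 1 * INR k ^ k)) by ring.
    apply Rmult_le_compat_l; lra. }
  replace (2*k)%nat with (k*2)%nat by lia. rewrite pow_mult.
  replace ((((22/10) * exp 1 / INR k) ^ k) ^ 2 * INR (Factorial.fact k) ^ 2)
    with ((((22/10) * exp 1 / INR k) ^ k * INR (Factorial.fact k))^2) by ring.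
  assert (0 <= 2^k * (11/10)^k * exp 1).
  { apply Rmult_le_pos; [apply Rmult_le_pos; apply pow_le|]; lra. }
  apply Rle_trans with ((2^k * (11/10)^k * exp 1)^2); [|apply pow_incr; lra].
  replace ((2^k * (11/10)^k * exp 1)^2) with (4^k * ((121/100)^k * (exp 1 * exp 1))).
  2:{ replace 4 with (2*2) by lra. replace (121/100) with ((11/10)*(11/10)) by lra.
      rewrite !Rpow_mult_distr. ring. }
  rewrite (Rmult_comm (4^k)). apply Rmult_le_compat_r. apply pow_le; lra.
  pose proof (bern2 k). rewrite plus_INR. simpl (INR 1).
  assert ((729/100) <= exp 1 * exp 1) by nra.
  pose proof (pos_INR k).
  assert (0 <= (121/100)^k) by (apply pow_le; lra).
  nra.
Qed.

Definition rprod (I : list nat) (g : nat -> R) : R := fold_right (fun p acc => g p * acc) 1 I.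

Lemma rprod_perm I J g : Permutation I J -> rprod I g = rprod J g.
Proof.
  induction 1; simpl; try reflexivity.
  - rewrite IHPermutation. reflexivity.
  - ring.
  - congruence.
Qed.

Lemma extract_min (f : nat -> R) I : I <> [] ->
  exists m I', Permutation I (m::I') /\ forall p, In p I' -> f m <= f p.
Proof.
  induction I as [|x I IH]; intros H. congruence.
  destruct I as [|y I0].
  - exists x, []. split. apply Permutation_refl. intros p [].
  - destruct (IH ltac:(discriminate)) as (m0 & I0' & Hp & Hm).
    destruct (Rle_dec (f x) (f m0)).
    + exists x, (y::I0). split. apply Permutation_refl.
      intros p Hin. apply (Permutation_in _ Hp) in Hin. destruct Hin as [<-|Hin]. lra.
      specialize (Hm p Hin). lra.
    + exists m0, (x::I0'). split.
      * eapply perm_trans. apply perm_skip. exact Hp. apply perm_swap.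
      * intros p [<-|Hin]. lra. auto.
Qed.

Definition sepd (t : nat -> R) (d : R) (I : list nat) : Prop :=
  forall p q, In p I -> In q I -> p <> q -> d <= Rabs (t p - t q).

Lemma sepd_incl t d I J : incl J I -> sepd t d I -> sepd t d J.
Proof. unfold sepd. intros Hi Hs p q Hp Hq Hpq. apply Hs; auto. Qed.

Lemma pack (t : nat -> R) d : 0 < d -> forall I a b, NoDup I ->
  (forall p, In p I -> a <= t p <= b) -> sepd t d I -> I <> [] ->
  INR (length I) * d <= b - a + d.
Proof.
  intros Hd I. remember (length I) as N. revert I HeqN. induction N as [|N IH]; intros I HN a b Hnd Hab Hs Hne.
  - simpl. destruct I. congruence. discriminate.
  - destruct (extract_min t I Hne) as (m & I' & Hp & Hm).
    assert (HmI : In m I) by (apply (Permutation_in m (Permutation_sym Hp)); left; auto).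
    assert (HI' : forall p, In p I' -> In p I).
    { intros p Hin. apply (Permutation_in p (Permutation_sym Hp)). right; auto. }
    assert (Hnd' : NoDup (m::I')) by (eapply Permutation_NoDup; eauto).
    inversion Hnd' as [|? ? Hnm Hnd'']; subst.
    assert (Hlen : length I' = N) by (apply Permutation_length in Hp; simpl in Hp; lia).
    rewrite S_INR.
    destruct I' as [|z I''].
    + simpl in Hlen. subst N. simpl. pose proof (Hab m HmI). lra.
    + assert (Hgt : forall p, In p (z::I'') -> t m + d <= t p).
      { intros p Hin. assert (p <> m) by (intro; subst; contradiction).
        pose proof (Hs p m (HI' p Hin) HmI H). pose proof (Hm p Hin).
        unfold Rabs in H0; destruct (Rcase_abs (t p - t m)); lra. }
      pose proof (IH (z::I'') (eq_sym Hlen) (t m + d) b Hnd''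
        ltac:(intros p Hin; split; [apply Hgt; auto| apply Hab; auto])
        ltac:(eapply sepd_incl; [|exact Hs]; intros p Hin; auto) ltac:(discriminate)).
      pose proof (Hab m HmI). lra.
Qed.

Lemma length_filter_split {A} (f : A -> bool) l :
  length l = (length (filter f l) + length (filter (fun x => negb (f x)) l))%nat.
Proof. induction l; simpl; auto. destruct (f a); simpl; lia. Qed.

Lemma far (t : nat -> R) d j I D : 0 < d -> NoDup I -> ~ In j I -> sepd t d (j::I) ->
  (forall p, In p I -> Rabs (t p - t j) <= D) -> 0 <= D ->
  INR (length I) * d <= 2 * D.
Proof.
  intros Hd Hnd HjI Hs HD HD0.
  set (f := fun p => if Rlt_dec (t j) (t p) then true else false).
  rewrite (length_filter_split f I), plus_INR.
  assert (Hsj : forall p, In p I -> d <= Rabs (t p - t j)).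
  { intros p Hp. apply Hs; simpl; auto. intro; subst; contradiction. }
  assert (H1 : INR (length (filter f I)) * d <= D).
  { destruct (filter f I) as [|z l] eqn:E.
    - simpl. lra.
    - rewrite <- E.
      assert (Hr : forall p, In p (filter f I) -> t j + d <= t p <= t j + D).
      { intros p Hp. apply filter_In in Hp. destruct Hp as [Hp Hf].
        unfold f in Hf. destruct (Rlt_dec (t j) (t p)); [|discriminate].
        pose proof (Hsj p Hp). pose proof (HD p Hp).
        unfold Rabs in *. destruct (Rcase_abs (t p - t j)); lra. }
      pose proof (pack t d Hd (filter f I) (t j + d) (t j + D) (NoDup_filter _ Hnd) Hr
        ltac:(eapply sepd_incl; [|exact Hs]; intros p Hp; right; apply filter_In in Hp; tauto)
        ltac:(rewrite E; discriminate)).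
      lra. }
  assert (H2 : INR (length (filter (fun x => negb (f x)) I)) * d <= D).
  { destruct (filter (fun x => negb (f x)) I) as [|z l] eqn:E.
    - simpl. lra.
    - rewrite <- E.
      assert (Hr : forall p, In p (filter (fun x => negb (f x)) I) -> t j - D <= t p <= t j - d).
      { intros p Hp. apply filter_In in Hp. destruct Hp as [Hp Hf].
        unfold f in Hf. destruct (Rlt_dec (t j) (t p)); [discriminate|].
        pose proof (Hsj p Hp). pose proof (HD p Hp).
        unfold Rabs in *. destruct (Rcase_abs (t p - t j)); lra. }
      pose proof (pack t d Hd _ (t j - D) (t j - d) (NoDup_filter _ Hnd) Hr
        ltac:(eapply sepd_incl; [|exact Hs]; intros p Hp; right; apply filter_In in Hp; tauto)
        ltac:(rewrite E; discriminate)).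
      lra. }
  lra.
Qed.

Lemma prod_lb (t : nat -> R) d j : 0 < d -> forall I, NoDup I -> ~ In j I -> sepd t d (j::I) ->
  (d/2)^(length I) * INR (Factorial.fact (length I)) <= rprod I (fun p => Rabs (t p - t j)).
Proof.
  intros Hd I. remember (length I) as N. revert I HeqN.
  induction N as [|N IH]; intros I HN Hnd HjI Hs.
  - destruct I; [|discriminate]. simpl. lra.
  - assert (Hne : I <> []) by (intro; subst; discriminate).
    destruct (extract_min (fun p => - Rabs (t p - t j)) I Hne) as (m & I' & Hp & Hm).
    assert (HmI : In m I) by (apply (Permutation_in m (Permutation_sym Hp)); left; auto).
    assert (HI' : forall p, In p I' -> In p I).
    { intros p Hin. apply (Permutation_in p (Permutation_sym Hp)). right; auto. }
    assert (Hnd' : NoDup (m::I')) by (eapply Permutation_NoDup; eauto).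
    inversion Hnd' as [|? ? Hnm Hnd'']; subst.
    assert (Hlen : length I' = N) by (apply Permutation_length in Hp; simpl in Hp; lia).
    set (D := Rabs (t m - t j)).
    assert (HD : forall p, In p I -> Rabs (t p - t j) <= D).
    { intros p Hin. apply (Permutation_in p Hp) in Hin. destruct Hin as [<-|Hin]. unfold D; lra.
      specialize (Hm p Hin). simpl in Hm. unfold D. lra. }
    pose proof (far t d j I D Hd Hnd HjI Hs HD (Rabs_pos _)) as Hfar.
    rewrite <- HN in Hfar. rewrite S_INR in Hfar.
    rewrite (rprod_perm _ _ _ Hp). simpl.
    pose proof (IH I' (eq_sym Hlen) Hnd'' ltac:(intro; apply HjI; auto)
      ltac:(eapply sepd_incl; [|exact Hs]; intros p [<-|Hin]; [left|right]; auto)) as HIH.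
    fold D.
    replace (Factorial.fact N + N * Factorial.fact N)%nat with (S N * Factorial.fact N)%nat by (simpl; lia). rewrite mult_INR, S_INR.
    assert (0 <= (d/2)^N * INR (Factorial.fact N)).
    { apply Rmult_le_pos. apply pow_le; lra. apply pos_INR. }
    replace (d / 2 * (d / 2) ^ N * ((INR N + 1) * INR (Factorial.fact N)))
      with ((d/2 * (INR N + 1)) * ((d/2)^N * INR (Factorial.fact N))) by ring.
    pose proof (pos_INR N).
    apply Rmult_le_compat; [nra | lra | lra | exact HIH].
Qed.

Local Open Scope C_scope.

Definition csum (I : list nat) (F : nat -> C) : C := fold_right (fun j acc => F j + acc) 0 I.
Definition cprod (I : list nat) (g : nat -> C) : C := fold_right (fun p acc => g p * acc) 1 I.
Definition rm (j : nat) (I : list nat) := filter (fun p => negb (Nat.eqb p j)) I.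

Lemma csum_perm I J F : Permutation I J -> csum I F = csum J F.
Proof. induction 1; simpl; try reflexivity. rewrite IHPermutation; auto. ring. congruence. Qed.
Lemma cprod_perm I J F : Permutation I J -> cprod I F = cprod J F.
Proof. induction 1; simpl; try reflexivity. rewrite IHPermutation; auto. ring. congruence. Qed.
Lemma filter_perm (f : nat -> bool) I J : Permutation I J -> Permutation (filter f I) (filter f J).
Proof.
  induction 1; simpl; try constructor.
  - destruct (f x); auto.
  - destruct (f x), (f y); try constructor; try apply Permutation_refl.
  - eapply perm_trans; eauto.
Qed.
Lemma csum_ext I F G : (forall j, In j I -> F j = G j) -> csum I F = csum I G.
Proof. induction I; simpl; intros H; auto. rewrite H, IHI; auto. Qed.
Lemma csum_plus I F G : csum I (fun j => F j + G j) = csum I F + csum I G.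
Proof. induction I; simpl. ring. rewrite IHI. ring. Qed.
Lemma csum_scal I F k : csum I (fun j => k * F j) = k * csum I F.
Proof. induction I; simpl. ring. rewrite IHI. ring. Qed.

Lemma Cmod_cprod I (g : nat -> C) : Cmod (cprod I g) = fold_right (fun p acc => (Cmod (g p) * acc)%R) 1%R I.
Proof. induction I; simpl. apply Cmod_1. rewrite Cmod_mult, IHI. reflexivity. Qed.

Lemma cprod_nz I (g : nat -> C) : (forall p, In p I -> g p <> 0) -> cprod I g <> 0.
Proof.
  intros H. apply Cmod_gt_0. rewrite Cmod_cprod.
  induction I; simpl. lra.
  apply Rmult_lt_0_compat. apply Cmod_gt_0. apply H; simpl; auto. apply IHI. intros; apply H; simpl; auto.
Qed.

Lemma Cminus_eq_0 (a b : C) : a - b = 0 -> a = b.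
Proof. intros H. replace a with ((a - b) + b) by ring. rewrite H. ring. Qed.

Definition injx (x : nat -> C) (I : list nat) := forall p q, In p I -> In q I -> x p = x q -> p = q.

Definition DD (x : nat -> C) (I : list nat) (F : C -> C) : C :=
  csum I (fun j => F (x j) / cprod (rm j I) (fun p => x j - x p)).

Lemma DD_ext x I F G : (forall z, F z = G z) -> DD x I F = DD x I G.
Proof. intros H. unfold DD. apply csum_ext. intros. rewrite H. reflexivity. Qed.
Lemma DD_plus x I F G : DD x I (fun z => F z + G z) = DD x I F + DD x I G.
Proof. unfold DD. rewrite <- csum_plus. apply csum_ext. intros. unfold Cdiv. ring. Qed.
Lemma DD_scal x I F k : DD x I (fun z => k * F z) = k * DD x I F.
Proof. unfold DD. rewrite <- csum_scal. apply csum_ext. intros. unfold Cdiv. ring. Qed.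
Lemma DD_perm x I J F : Permutation I J -> DD x I F = DD x J F.
Proof.
  intros HP. unfold DD. rewrite (csum_perm _ _ _ HP). apply csum_ext. intros j _.
  unfold rm. rewrite (cprod_perm _ _ _ (filter_perm _ _ _ HP)). reflexivity.
Qed.

Lemma DD_cons_factor x c I G : NoDup (c::I) -> injx x (c::I) ->
  DD x (c::I) (fun z => (z - x c) * G z) = DD x I G.
Proof.
  intros Hnd Hinj. inversion Hnd as [|? ? HcI HndI]; subst.
  unfold DD. simpl. replace (x c - x c) with (RtoC 0) by ring.
  rewrite Cmult_0_l. unfold Cdiv at 1. rewrite Cmult_0_l, Cplus_0_l.
  apply csum_ext. intros j Hj.
  assert (Hcj : c <> j) by (intro; subst; contradiction).
  unfold rm at 1. simpl. destruct (Nat.eqb c j) eqn:E. apply Nat.eqb_eq in E. contradiction.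
  simpl. fold (rm j I).
  assert (Hne : x j - x c <> 0).
  { intro H. apply Hcj. symmetry. apply Hinj; simpl; auto. apply Cminus_eq_0 in H. auto. }
  assert (Hp : cprod (rm j I) (fun p => x j - x p) <> 0).
  { apply cprod_nz. intros p Hp. unfold rm in Hp. apply filter_In in Hp. destruct Hp as [Hp Hb].
    intro H. apply Cminus_eq_0 in H. assert (j = p) by (apply Hinj; simpl; auto).
    subst. rewrite Nat.eqb_refl in Hb. discriminate. }
  field. split; auto.
Qed.

Lemma injx_incl x I J : incl J I -> injx x I -> injx x J.
Proof. unfold injx. intros Hi H p q Hp Hq. apply H; auto. Qed.

Lemma DD_one x : forall N I, length I = N -> NoDup I -> injx x I -> I <> [] ->
  DD x I (fun _ => 1) = if Nat.eqb N 1 then 1 else 0.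
Proof.
  induction N as [|N IH]; intros I HN Hnd Hinj Hne.
  - destruct I; [congruence|discriminate].
  - destruct I as [|c [|c' I'']]; [congruence| |].
    + simpl in HN. injection HN as HN. subst N. unfold DD, rm. simpl. rewrite Nat.eqb_refl. simpl.
      field.
    + simpl in HN. injection HN as HN. subst N.
      assert (Hcc : x c' - x c <> 0).
      { intro H. apply Cminus_eq_0 in H. assert (c' = c) by (apply Hinj; simpl; auto).
        subst. inversion Hnd; subst. simpl in *. tauto. }
      rewrite (DD_ext x _ _ (fun z => / (x c' - x c) * ((z - x c) * 1 + (-1) * ((z - x c') * 1)))).
      2:{ intros z. field. auto. }
      rewrite DD_scal, DD_plus, DD_scal.
      rewrite DD_cons_factor by auto.
      rewrite (DD_perm x (c::c'::I'') (c'::c::I'')) by constructor.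
      rewrite DD_cons_factor.
      2:{ eapply Permutation_NoDup; [constructor|exact Hnd]. }
      2:{ eapply injx_incl; [|exact Hinj]. intros p Hp. simpl in *; tauto. }
      inversion Hnd as [|? ? H1 H2]; subst. inversion H2; subst.
      rewrite (IH (c'::I'')), (IH (c::I'')); simpl; auto.
      * ring.
      * constructor; auto. intro; apply H1; simpl; auto.
      * eapply injx_incl; [|exact Hinj]. intros p Hp. simpl in *; tauto.
      * discriminate.
      * eapply injx_incl; [|exact Hinj]. intros p Hp. simpl in *; tauto.
      * discriminate.
Qed.

Definition lprod (us : list C) (w : C) : C := fold_right (fun u acc => (w - u) * acc) 1 us.

Lemma lagrange x : forall us N I, length I = N -> NoDup I -> injx x I -> I <> [] ->
  (length us < N)%nat ->
  DD x I (lprod us) = if Nat.eqb (S (length us)) N then 1 else 0.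
Proof.
  induction us as [|u us IH]; intros N I HN Hnd Hinj Hne Hlt.
  - transitivity (DD x I (fun _ => 1)). reflexivity.
    rewrite (DD_one x N I HN Hnd Hinj Hne). destruct N as [|[|]]; reflexivity.
  - destruct I as [|c I']; [congruence|].
    rewrite (DD_ext x _ _ (fun z => (z - x c) * lprod us z + (x c - u) * lprod us z)).
    2:{ intros z. simpl. ring. }
    rewrite DD_plus, DD_scal, DD_cons_factor by auto.
    simpl in HN, Hlt.
    inversion Hnd; subst.
    rewrite (IH (length I') I'), (IH (S (length I')) (c::I')); auto.
    + cbn [length]. destruct (Nat.eqb_spec (S (length us)) (S (length I'))) as [E1|E1]; [lia|].
      destruct (Nat.eqb_spec (S (S (length us))) (S (length I')));
      destruct (Nat.eqb_spec (S (length us)) (length I')); try lia; ring.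
    + lia.
    + eapply injx_incl; [|exact Hinj]. intros p Hp. simpl; auto.
    + destruct I'; simpl in Hlt; [lia|discriminate].
    + lia.
Qed.

Definition Dop (z : C) (u : nat -> C) : nat -> C := fun l => u (S l) - z * u l.
Fixpoint chain (zs : list C) (u : nat -> C) : nat -> C :=
  match zs with [] => u | z::zs' => Dop z (chain zs' u) end.

Lemma chain_ext zs u v : (forall l, u l = v l) -> forall l, chain zs u l = chain zs v l.
Proof. intros H. induction zs; simpl; auto. unfold Dop. intros l. rewrite !IHzs. reflexivity. Qed.
Lemma chain_plus zs u v l : chain zs (fun l => u l + v l) l = chain zs u l + chain zs v l.
Proof. revert l. induction zs; simpl; auto. unfold Dop. intros l. rewrite !IHzs. ring. Qed.
Lemma chain_scal zs u k l : chain zs (fun l => k * u l) l = k * chain zs u l.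
Proof. revert l. induction zs; simpl; auto. unfold Dop. intros l. rewrite !IHzs. ring. Qed.
Lemma chain_exp zs c w l : chain zs (fun l => c * w ^ l) l = c * lprod zs w * w ^ l.
Proof. revert l. induction zs; simpl; intros; [ring|]. unfold Dop. rewrite !IHzs. simpl. ring. Qed.


Lemma chain_csum zs I (c w : nat -> C) l :
  chain zs (fun l => csum I (fun p => c p * w p ^ l)) l = csum I (fun p => c p * lprod zs (w p) * w p ^ l).
Proof.
  revert l. induction I; intros l; simpl.
  - clear. revert l. induction zs; simpl; auto. unfold Dop. intros l. rewrite !IHzs. ring.
  - rewrite chain_plus, chain_exp, IHI. reflexivity.
Qed.

Definition lmod (zs : list C) : R := fold_right (fun z acc => (1 + Cmod z) * acc)%R 1%R zs.

Lemma lmod_pos zs : (0 < lmod zs)%R.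
Proof. induction zs; simpl. lra. pose proof (Cmod_ge_0 a). apply Rmult_lt_0_compat; lra. Qed.

Lemma chain_bound zs : forall N B u, (forall l, (l <= N + length zs)%nat -> (Cmod (u l) < B)%R) ->
  forall l, (l <= N)%nat -> (Cmod (chain zs u l) < B * lmod zs)%R.
Proof.
  induction zs as [|z zs IH]; intros N B u H l Hl.
  - simpl. rewrite Rmult_1_r. apply H. lia.
  - simpl. unfold Dop.
    pose proof (IH (S N) B u ltac:(intros l' Hl'; apply H; simpl; lia)) as H'.
    pose proof (H' (S l) ltac:(lia)). pose proof (H' l ltac:(lia)).
    eapply Rle_lt_trans. apply (Cmod_triangle _ (- (z * chain zs u l))).
    rewrite Cmod_opp, Cmod_mult. pose proof (Cmod_ge_0 z).
    assert (Cmod z * Cmod (chain zs u l) <= Cmod z * (B * lmod zs))%R.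
    { apply Rmult_le_compat_l; lra. }
    nra.
Qed.

Lemma lprod_app a b w : lprod (a ++ b) w = lprod a w * lprod b w.
Proof. induction a; simpl. ring. rewrite IHa. ring. Qed.
Lemma lprod_zero zs w : In w zs -> lprod zs w = 0.
Proof. induction zs; simpl. intros []. intros [H|H]. subst. ring. rewrite IHzs; auto. ring. Qed.
Lemma lmod_app a b : lmod (a ++ b) = (lmod a * lmod b)%R.
Proof. induction a; simpl. ring. rewrite IHa. ring. Qed.
Lemma lmod_le zs : (forall z, In z zs -> (Cmod z <= 1)%R) -> (lmod zs <= 2 ^ length zs)%R.
Proof.
  induction zs; simpl; intros H. lra. pose proof (Cmod_ge_0 a). pose proof (lmod_pos zs).
  pose proof (H a (or_introl eq_refl)). pose proof (IHzs (fun z Hz => H z (or_intror Hz))).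
  apply Rmult_le_compat; lra.
Qed.

Lemma Cexpi_add a b : Cexpi (a + b) = Cexpi a * Cexpi b.
Proof. unfold Cexpi, Cmult. simpl. rewrite cos_plus, sin_plus. f_equal; ring. Qed.
Lemma Cexpi_pow t l : Cexpi (INR l * t) = Cexpi t ^ l.
Proof.
  induction l. simpl. unfold Cexpi. rewrite Rmult_0_l, cos_0, sin_0. reflexivity.
  rewrite S_INR. replace ((INR l + 1) * t)%R with (t + INR l * t)%R by ring.
  rewrite Cexpi_add, IHl. reflexivity.
Qed.
Lemma Cmod_Cexpi t : Cmod (Cexpi t) = 1%R.
Proof.
  unfold Cmod, Cexpi. simpl. pose proof (sin2_cos2 t). unfold Rsqr in H.
  replace (cos t * (cos t * 1) + sin t * (sin t * 1))%R with 1%R by lra. apply sqrt_1.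
Qed.

Lemma sin_abs_lb x : (Rabs x <= PI/2)%R -> (2 * Rabs x / PI <= Rabs (sin x))%R.
Proof.
  intros H. unfold Rabs in *. destruct (Rcase_abs x).
  - pose proof (jordan (-x) ltac:(lra)). rewrite sin_neg in H0.
    destruct (Rcase_abs (sin x)); lra.
  - pose proof (jordan x ltac:(lra)). pose proof PI_RGT_0.
    assert (0 <= 2*x/PI)%R by (apply Rmult_le_pos; [lra|left; apply Rinv_0_lt_compat; lra]).
    destruct (Rcase_abs (sin x)); lra.
Qed.

Lemma chord a b : (Rabs (a - b) <= PI)%R -> (2 / PI * Rabs (a - b) <= Cmod (Cexpi a - Cexpi b)%C)%R.
Proof.
  intros H. pose proof PI_RGT_0.
  set (x := ((a - b)/2)%R).
  assert (Hx : (Rabs x <= PI/2)%R) by (unfold x; rewrite Rabs_div, (Rabs_right 2) by lra; lra).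
  pose proof (sin_abs_lb x Hx) as Hs.
  assert (Heq : (fst (Cexpi a - Cexpi b)%C ^ 2 + snd (Cexpi a - Cexpi b)%C ^ 2 = 4 * sin x ^ 2)%R).
  { unfold Cexpi. simpl.
    pose proof (sin2_cos2 a). pose proof (sin2_cos2 b). unfold Rsqr in *.
    assert (cos (a - b) = 1 - 2 * sin x * sin x)%R.
    { rewrite <- cos_2a_sin. unfold x. f_equal. field. }
    rewrite cos_minus in H3. nra. }
  unfold Cmod. rewrite Heq.
  assert (Habs : (Rabs (a - b) = 2 * Rabs x)%R).
  { unfold x. rewrite Rabs_div, (Rabs_right 2) by lra. field. }
  rewrite Habs.
  assert (0 <= 2 / PI * (2 * Rabs x))%R.
  { pose proof (Rabs_pos x). apply Rmult_le_pos; [|lra]. left. apply Rdiv_lt_0_compat; lra. }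
  rewrite <- (sqrt_pow2 (2 / PI * (2 * Rabs x))) by auto.
  apply sqrt_le_1_alt.
  assert (4 * sin x ^ 2 = (2 * Rabs (sin x))^2)%R.
  { rewrite <- (pow2_abs (sin x)). ring. }
  rewrite H2. apply pow_incr. split; auto.
  replace (2 / PI * (2 * Rabs x))%R with (2 * (2 * Rabs x / PI))%R by (field; lra). lra.
Qed.

Lemma csum_lt I (F : nat -> C) c : I <> [] -> (forall j, In j I -> (Cmod (F j) < c)%R) ->
  (Cmod (csum I F) < INR (length I) * c)%R.
Proof.
  induction I as [|x I IH]; intros Hne H. congruence.
  simpl csum. simpl length. rewrite S_INR.
  eapply Rle_lt_trans. apply Cmod_triangle.
  pose proof (H x (or_introl eq_refl)).
  destruct I as [|y I'].
  - simpl. rewrite Cmod_0. lra.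
  - pose proof (IH ltac:(discriminate) (fun j Hj => H j (or_intror Hj))). lra.
Qed.

Lemma ex_or_all I (P : nat -> R) c : (exists j, In j I /\ (c <= P j)%R) \/ (forall j, In j I -> (P j < c)%R).
Proof.
  induction I as [|x I IH]. right; intros j [].
  destruct (Rle_dec c (P x)). left. exists x. split; simpl; auto.
  destruct IH as [(j & Hj & Hc)|Hall]. left. exists j. simpl; auto.
  right. intros j [<-|Hj]. lra. auto.
Qed.

Lemma csum_zero I (F : nat -> C) : (forall j, In j I -> F j = 0) -> csum I F = 0.
Proof. induction I; simpl; intros H. reflexivity. rewrite H, IHI; auto. ring. Qed.

Lemma csum_single I (F : nat -> C) j : NoDup I -> In j I -> (forall p, In p I -> p <> j -> F p = 0) ->
  csum I F = F j.
Proof.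
  induction I as [|x I IH]; intros Hnd Hj H. destruct Hj.
  inversion Hnd; subst. simpl.
  destruct Hj as [<-|Hj].
  - rewrite csum_zero. ring. intros p Hp. apply H. simpl; auto. intro; subst; contradiction.
  - rewrite H. rewrite IH; auto. ring. intros p Hp Hpj. apply H; simpl; auto.
    simpl; auto. intro; subst; contradiction.
Qed.

Lemma lprod_map_cprod (w : nat -> C) L z : lprod (map w L) z = cprod L (fun p => z - w p).
Proof. induction L; simpl. reflexivity. rewrite IHL. reflexivity. Qed.

Lemma rm_In j I p : In p (rm j I) <-> In p I /\ p <> j.
Proof.
  unfold rm. rewrite filter_In. split; intros [H1 H2]; split; auto.
  intro; subst. rewrite Nat.eqb_refl in H2. discriminate.
  destruct (Nat.eqb_spec p j); auto.
Qed.

Lemma length_rm j I : NoDup I -> In j I -> length (rm j I) = (length I - 1)%nat.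
Proof.
  induction I as [|x I IH]; intros Hnd Hj. destruct Hj.
  inversion Hnd; subst. unfold rm in *. simpl.
  destruct Hj as [<-|Hj].
  - rewrite Nat.eqb_refl. simpl.
    assert (forall l, ~ In x l -> filter (fun p => negb (p =? x)%nat) l = l).
    { induction l; simpl; intros Hn; auto. destruct (Nat.eqb_spec a x). subst; tauto.
      simpl. rewrite IHl; auto. }
    rewrite H; auto. lia.
  - destruct (Nat.eqb_spec x j). subst; contradiction. simpl. rewrite IH; auto.
    destruct I; [destruct Hj|]. simpl. lia.
Qed.

Lemma rprod_mono L f g : (forall p, In p L -> (0 <= f p <= g p)%R) -> (rprod L f <= rprod L g)%R.
Proof.
  induction L; simpl; intros H. lra.
  assert (0 <= rprod L f)%R.
  { clear IHL. induction L; simpl. lra. apply Rmult_le_pos. apply H; simpl; auto.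
    apply IHL. intros p Hp. apply H. simpl in Hp |- *. tauto. }
  pose proof (H a (or_introl eq_refl)).
  apply Rmult_le_compat; try lra. apply IHL. intros; apply H; simpl; auto.
Qed.

Lemma rprod_scal L f c : rprod L (fun p => c * f p)%R = (c ^ length L * rprod L f)%R.
Proof. induction L; simpl. ring. rewrite IHL. ring. Qed.

Lemma fold_Rmin_le l init v : In v l -> (fold_right Rmin init l <= v)%R.
Proof.
  induction l; simpl. intros []. intros [H|H]. subst. apply Rmin_l.
  eapply Rle_trans. apply Rmin_r. auto.
Qed.
Lemma fold_Rmin_pos l init : (0 < init)%R -> (forall v, In v l -> 0 < v)%R -> (0 < fold_right Rmin init l)%R.
Proof.
  induction l; simpl; intros H1 H2. auto. apply Rmin_glb_lt; auto.
Qed.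

Local Close Scope C_scope.

Theorem main_aux
  (n M : nat) (Om sigma : R) (a : nat -> Cx) (y : nat -> R) (W Y : nat -> Cx)
  (Hn : (2 <= n)%nat) (HM : (2 * n < M)%nat) (HOm : 0 < Om)
  (Ha : forall j, (1 <= j <= n)%nat -> a j <> C0)
  (Hy_dist : forall p j, (1 <= p <= n)%nat -> (1 <= j <= n)%nat -> p <> j -> y p <> y j)
  (Hy_int : forall j, (1 <= j <= n)%nat ->
      - (INR n - 1) * PI / (2 * Om) <= y j <= (INR n - 1) * PI / (2 * Om))
  (HY : forall q, (1 <= q <= M)%nat -> Y q = Cadd (fourier n a y (omega_q Om M q)) (W q))
  (HW : forall q, (1 <= q <= M)%nat -> Defs.Cmod (W q) < sigma)
  (Hsep : forall p j, (1 <= p <= n)%nat -> (1 <= j <= n)%nat -> p <> j ->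
      Rabs (y p - y j) >=
        4.4 * PI * exp 1 / Om * Rpower (sigma / mmin n a) (1 / (2 * INR n - 2))) :
  ~ (exists (k : nat) (ah : nat -> Cx) (yh : nat -> R),
        (k < n)%nat /\ admissible Om M Y sigma k ah yh).
Proof.
  intros (k & ah & yh & Hk & Hadm).
  pose proof PI_RGT_0 as Hpi.
  assert (Hsig : 0 < sigma).
  { pose proof (HW 1%nat ltac:(lia)). pose proof (Cmod_ge_0 (W 1%nat)). unfold Defs.Cmod in H.
    change (Cmod (W 1%nat) < sigma) in H. lra. }
  set (m := mmin n a).
  assert (Hm_le : forall j, (1 <= j <= n)%nat -> m <= Cmod (a j)).
  { intros j Hj. unfold m, mmin. apply fold_Rmin_le. apply in_map_iff. exists j. split; auto.
    apply in_seq. lia. }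
  assert (Hm_pos : 0 < m).
  { unfold m, mmin. apply fold_Rmin_pos.
    - apply Cmod_gt_0. apply (Ha 1%nat). lia.
    - intros v Hv. apply in_map_iff in Hv. destruct Hv as (j & <- & Hj). apply in_seq in Hj.
      apply Cmod_gt_0. apply Ha. lia. }
  set (k1 := (n - 1)%nat).
  assert (Hk1 : (1 <= k1)%nat) by lia.
  assert (Hn_k1 : INR n = INR k1 + 1).
  { unfold k1. rewrite <- S_INR. f_equal. lia. }
  set (rho := Rpower (sigma / m) (1 / (2 * INR n - 2))).
  assert (Hrho : 0 < rho) by (unfold rho, Rpower; apply exp_pos).
  assert (Hrho_pow : m * rho ^ (2 * k1) = sigma).
  { unfold rho, Rpower. rewrite exp_pow_nat.
    replace (INR (2 * k1) * (1 / (2 * INR n - 2) * ln (sigma / m))) with (ln (sigma / m)).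
    rewrite exp_ln. field. lra. apply Rdiv_lt_0_compat; lra.
    rewrite mult_INR. simpl (INR 2). rewrite Hn_k1. field.
    assert (1 <= INR k1) by (apply (le_INR 1); lia). lra. }
  set (d0 := 44/10 * PI * exp 1 / Om * rho).
  assert (Hd0 : 0 < d0).
  { unfold d0. pose proof (exp_pos 1). apply Rmult_lt_0_compat; [|auto].
    apply Rdiv_lt_0_compat; [|auto]. nra. }
  assert (Hsep' : forall p j, (1 <= p <= n)%nat -> (1 <= j <= n)%nat -> p <> j -> d0 <= Rabs (y p - y j)).
  { intros p j Hp Hj Hpj. pose proof (Hsep p j Hp Hj Hpj). fold m rho in H. unfold d0. lra. }
  set (K := (2 * k1)%nat).
  assert (HK : (K <= M - 1)%nat) by (unfold K, k1; lia).
  destruct (existT (fun s => (1 <= s /\ s * K <= M - 1 /\ M - 1 < 2 * s * K)%nat) ((M-1)/K)%nat) as [s Hs].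
  { pose proof (Nat.div_mod (M-1) K ltac:(unfold K; lia)).
    pose proof (Nat.mod_upper_bound (M-1) K ltac:(unfold K; lia)).
    set (q := ((M-1)/K)%nat) in *. set (r := ((M-1) mod K)%nat) in *.
    assert (1 <= q)%nat by (destruct q; nia). nia. }
  destruct Hs as (Hs1 & Hs2 & Hs3).
  assert (HMr : 0 < INR M - 1).
  { assert (1 < INR M) by (apply (lt_INR 1); lia). lra. }
  assert (HsK : INR s * (2 * INR k1) <= INR M - 1).
  { replace (INR M - 1) with (INR (M - 1)) by (rewrite minus_INR by lia; reflexivity).
    replace (2 * INR k1) with (INR K) by (unfold K; rewrite mult_INR; reflexivity).
    rewrite <- mult_INR. apply le_INR. exact Hs2. }
  assert (HsK2 : INR M - 1 < 2 * INR s * (2 * INR k1)).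
  { replace (INR M - 1) with (INR (M - 1)) by (rewrite minus_INR by lia; reflexivity).
    replace (2 * INR k1) with (INR K) by (unfold K; rewrite mult_INR; reflexivity).
    replace 2 with (INR 2) by reflexivity. rewrite <- !mult_INR. apply lt_INR. exact Hs3. }
  assert (Hk1r : 1 <= INR k1) by (apply (le_INR 1); lia).
  assert (Hsr : 1 <= INR s) by (apply (le_INR 1); lia).
  set (H := INR s * (2 * Om / (INR M - 1))).
  assert (HHN : H * (INR M - 1) = 2 * Om * INR s) by (unfold H; field; lra).
  assert (HHpos : 0 < H) by (unfold H; apply Rmult_lt_0_compat; [lra|]; apply Rdiv_lt_0_compat; lra).
  assert (HHup : H * INR k1 <= Om) by nra.
  assert (HHlo : Om <= 2 * INR k1 * H) by nra.
  set (t := fun p => y p * H).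
  set (w := fun p => Cexpi (t p)).
  set (delta := H * d0).
  assert (Hdelta : 0 < delta) by (unfold delta; nra).
  assert (Hsep_t : forall p q, (1 <= p <= n)%nat -> (1 <= q <= n)%nat -> p <> q -> delta <= Rabs (t p - t q)).
  { intros p q Hp Hq Hpq. unfold t, delta.
    replace (y p * H - y q * H) with ((y p - y q) * H) by ring.
    rewrite Rabs_mult, (Rabs_right H) by lra. pose proof (Hsep' p q Hp Hq Hpq). nra. }
  assert (Hup_t : forall p q, (1 <= p <= n)%nat -> (1 <= q <= n)%nat -> Rabs (t p - t q) <= PI).
  { intros p q Hp Hq. unfold t.
    replace (y p * H - y q * H) with ((y p - y q) * H) by ring.
    rewrite Rabs_mult, (Rabs_right H) by lra.
    pose proof (Hy_int p Hp). pose proof (Hy_int q Hq).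
    assert (Rabs (y p - y q) <= INR k1 * PI / Om).
    { rewrite Hn_k1 in H0, H1.
      replace (- (INR k1 + 1 - 1) * PI / (2 * Om)) with (- (INR k1 * PI / Om) / 2) in H0, H1 by (field; lra).
      replace ((INR k1 + 1 - 1) * PI / (2 * Om)) with ((INR k1 * PI / Om) / 2) in H0, H1 by (field; lra).
      unfold Rabs. destruct (Rcase_abs (y p - y q)); lra. }
    apply Rle_trans with (INR k1 * PI / Om * H). nra.
    replace (INR k1 * PI / Om * H) with (PI * (H * INR k1) / Om) by (field; lra).
    apply Rmult_le_reg_r with Om. lra. replace (PI * (H * INR k1) / Om * Om) with (PI * (H * INR k1)) by (field; lra).
    nra. }
  set (I := seq 1 n).
  assert (HI : forall p, In p I <-> (1 <= p <= n)%nat).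
  { intros p. unfold I. rewrite in_seq. lia. }
  assert (HndI : NoDup I) by apply seq_NoDup.
  assert (Hinj : injx w I).
  { intros p q Hp Hq Hw. apply HI in Hp. apply HI in Hq.
    destruct (Nat.eq_dec p q) as [|Hpq]; auto. exfalso.
    pose proof (chord (t p) (t q) (Hup_t p q Hp Hq)).
    unfold w in Hw. rewrite Hw in H0. replace (Cexpi (t q) - Cexpi (t q))%C with (RtoC 0) in H0 by ring.
    rewrite Cmod_0 in H0. pose proof (Hsep_t p q Hp Hq Hpq).
    assert (0 < 2 / PI) by (apply Rdiv_lt_0_compat; lra). nra. }
  set (wh := fun i => Cexpi (yh i * H)).
  set (us := map wh (seq 1 k) ++ repeat (RtoC 0) (n - 1 - k)).
  assert (Hlus : length us = k1).
  { unfold us. rewrite length_app, length_map, length_seq, repeat_length. unfold k1. lia. }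
  assert (HDD : DD w I (lprod us) = RtoC 1).
  { rewrite (lagrange w us n I); auto.
    - unfold us. rewrite length_app, length_map, length_seq, repeat_length.
      replace (S (k + (n - 1 - k))) with n by lia. rewrite Nat.eqb_refl. reflexivity.
    - unfold I. apply length_seq.
    - unfold I. destruct n; [lia|]. discriminate.
    - unfold us. rewrite length_app, length_map, length_seq, repeat_length. lia. }
  destruct (ex_or_all I (fun j => Cmod (lprod us (w j) / cprod (rm j I) (fun p => w j - w p))%C) (1 / INR n))
    as [(j & HjI & Hj)|Hall].
  2:{ exfalso. pose proof (csum_lt I _ (1 / INR n) ltac:(unfold I; destruct n; [lia|discriminate]) Hall) as Hc.
      fold (DD w I (lprod us)) in Hc. rewrite HDD, Cmod_1 in Hc.
      unfold I in Hc. rewrite length_seq in Hc. assert (0 < INR n) by (apply lt_0_INR; lia).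
      replace (INR n * (1 / INR n)) with 1 in Hc by (field; lra). lra. }
  assert (Hj1 := proj1 (HI j) HjI).
  set (Gj := cprod (rm j I) (fun p => w j - w p)%C) in *.
  assert (HGnz : Gj <> RtoC 0).
  { apply cprod_nz. intros p Hp. apply rm_In in Hp. destruct Hp as [Hp Hpj].
    intro E. apply Cminus_eq_0 in E. apply Hpj. symmetry. apply Hinj; auto. }
  rewrite Cmod_div in Hj by auto.
  set (zs := us ++ map w (rm j I)).
  assert (Hlzs : length zs = K).
  { unfold zs, us. rewrite !length_app, length_map, length_seq, repeat_length, length_map.
    rewrite length_rm by auto. unfold I. rewrite length_seq. unfold K, k1. lia. }
  set (u := fun l => (fourier n a y (omega_q Om M (1 + l * s)) - fourier k ah yh (omega_q Om M (1 + l * s)))%C).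
  assert (Hub : forall l, (l <= 0 + length zs)%nat -> Cmod (u l) < 2 * sigma).
  { intros l Hl. rewrite Hlzs in Hl. simpl in Hl.
    assert (Hq : (1 <= 1 + l * s <= M)%nat) by nia.
    pose proof (Hadm _ Hq) as H1. pose proof (HW _ Hq) as H2. pose proof (HY _ Hq) as H3.
    change (Cmod (fourier k ah yh (omega_q Om M (1 + l * s)) - Y (1 + l * s)%nat)%C < sigma) in H1.
    change (Cmod (W (1 + l * s)%nat) < sigma) in H2.
    unfold u. change (Y (1 + l * s)%nat = (fourier n a y (omega_q Om M (1 + l * s)) + W (1 + l * s)%nat)%C) in H3.
    replace (fourier n a y (omega_q Om M (1 + l * s)) - fourier k ah yh (omega_q Om M (1 + l * s)))%C
      with (- (fourier k ah yh (omega_q Om M (1 + l * s)) - Y (1 + l * s)%nat) + - W (1 + l * s)%nat)%C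
      by (rewrite H3; ring).
    eapply Rle_lt_trans. apply Cmod_triangle. rewrite !Cmod_opp. lra. }
  pose proof (chain_bound zs 0 (2 * sigma) u Hub 0 (le_n 0)) as Hchain.
  assert (Hlm : lmod zs <= 2 ^ K).
  { rewrite <- Hlzs. apply lmod_le. intros z Hz. unfold zs, us in Hz.
    apply in_app_iff in Hz. destruct Hz as [Hz|Hz]; [apply in_app_iff in Hz; destruct Hz as [Hz|Hz]|].
    - apply in_map_iff in Hz. destruct Hz as (i & <- & _). unfold wh. rewrite Cmod_Cexpi. lra.
    - apply repeat_spec in Hz. subst z. rewrite Cmod_0. lra.
    - apply in_map_iff in Hz. destruct Hz as (i & <- & _). unfold w. rewrite Cmod_Cexpi. lra. }
  set (c := fun p => (a p * Cexpi (y p * - Om))%C).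
  set (ch := fun i => (ah i * Cexpi (yh i * - Om))%C).
  assert (Hom : forall l, omega_q Om M (1 + l * s) = - Om + INR l * H).
  { intros l. unfold omega_q, H. rewrite plus_INR, mult_INR. simpl (INR 1). field. lra. }
  assert (Hexp : forall (x : R) l, Cexpi (x * omega_q Om M (1 + l * s)) = (Cexpi (x * - Om) * Cexpi (x * H) ^ l)%C).
  { intros x l. rewrite Hom. rewrite <- Cexpi_pow, <- Cexpi_add. f_equal. ring. }
  assert (Hu : forall l, u l = (csum I (fun p => c p * w p ^ l) + (-1) * csum (seq 1 k) (fun i => ch i * wh i ^ l))%C).
  { intros l. unfold u.
    change (fourier n a y (omega_q Om M (1 + l * s))) with (csum (seq 1 n) (fun p => a p * Cexpi (y p * omega_q Om M (1 + l * s)))%C).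
    change (fourier k ah yh (omega_q Om M (1 + l * s))) with (csum (seq 1 k) (fun p => ah p * Cexpi (yh p * omega_q Om M (1 + l * s)))%C).
    rewrite (csum_ext (seq 1 n) _ (fun p => c p * w p ^ l)%C).
    rewrite (csum_ext (seq 1 k) _ (fun i => ch i * wh i ^ l)%C). fold I. ring.
    - intros i _. rewrite Hexp. unfold ch, wh. ring.
    - intros p _. rewrite Hexp. unfold c, w, t. ring. }
  rewrite (chain_ext zs u _ Hu 0), chain_plus, chain_scal, !chain_csum in Hchain.
  rewrite (csum_zero (seq 1 k)) in Hchain.
  2:{ intros i Hi. rewrite lprod_zero. ring. unfold zs, us. apply in_app_iff. left. apply in_app_iff. left.
      apply in_map. auto. }
  rewrite (csum_single I _ j HndI HjI) in Hchain.
  2:{ intros p Hp Hpj. rewrite lprod_zero. ring. unfold zs. apply in_app_iff. right. apply in_map.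
      apply rm_In. auto. }
  unfold zs in Hchain. rewrite lprod_app, lprod_map_cprod in Hchain. fold Gj in Hchain.
  replace (c j * (lprod us (w j) * Gj) * w j ^ 0 + -1 * 0)%C with (c j * lprod us (w j) * Gj)%C in Hchain by (simpl; ring).
  rewrite !Cmod_mult in Hchain. unfold c in Hchain. rewrite Cmod_mult, Cmod_Cexpi, Rmult_1_r in Hchain.
  assert (Hlrm : length (rm j I) = k1).
  { rewrite length_rm by auto. unfold I. rewrite length_seq. reflexivity. }
  set (G0 := (22/10 * exp 1 * rho / INR k1) ^ k1 * INR (Factorial.fact k1)).
  assert (HG0 : 0 <= G0).
  { unfold G0. apply Rmult_le_pos; [|apply pos_INR]. apply pow_le.
    pose proof (exp_pos 1). apply Rmult_le_pos; [|left; apply Rinv_0_lt_compat; lra]. nra. }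
  assert (HGlb : G0 <= Cmod Gj).
  { unfold Gj. rewrite Cmod_cprod. change (fold_right (fun p acc => Cmod (w j - w p)%C * acc) 1 (rm j I))
      with (rprod (rm j I) (fun p => Cmod (w j - w p)%C)).
    apply Rle_trans with (rprod (rm j I) (fun p => 2 / PI * Rabs (t p - t j))).
    2:{ apply rprod_mono. intros p Hp. apply rm_In in Hp. destruct Hp as [Hp Hpj]. apply HI in Hp.
        split. apply Rmult_le_pos. left; apply Rdiv_lt_0_compat; lra. apply Rabs_pos.
        rewrite Rabs_minus_sym. apply chord. apply Hup_t; auto. }
    rewrite rprod_scal, Hlrm.
    pose proof (prod_lb t delta j Hdelta (rm j I) (NoDup_filter _ HndI)
      ltac:(intro Hc; apply rm_In in Hc; tauto)
      ltac:(intros p q Hp Hq Hpq; apply Hsep_t; auto;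
            [destruct Hp as [<-|Hp]; [auto|apply rm_In in Hp; apply HI; tauto]
            |destruct Hq as [<-|Hq]; [auto|apply rm_In in Hq; apply HI; tauto]])) as Hpl.
    rewrite Hlrm in Hpl.
    apply Rle_trans with ((2/PI)^k1 * ((delta/2)^k1 * INR (Factorial.fact k1))).
    2:{ apply Rmult_le_compat_l; auto. apply pow_le. left; apply Rdiv_lt_0_compat; lra. }
    rewrite <- Rmult_assoc, <- Rpow_mult_distr. unfold G0.
    apply Rmult_le_compat_r. apply pos_INR. apply pow_incr. split.
    - pose proof (exp_pos 1). apply Rmult_le_pos; [|left; apply Rinv_0_lt_compat; lra]. nra.
    - replace (2 / PI * (delta / 2)) with (H * (44/10 * exp 1 * rho / Om)) by (unfold delta, d0; field; lra).
      apply Rmult_le_reg_r with (INR k1). lra.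
      replace (22 / 10 * exp 1 * rho / INR k1 * INR k1) with (22/10 * exp 1 * rho) by (field; lra).
      replace (H * (44 / 10 * exp 1 * rho / Om) * INR k1) with ((2 * INR k1 * H) * (22/10 * exp 1 * rho) / Om) by (field; lra).
      pose proof (exp_pos 1).
      assert (0 < 22/10 * exp 1 * rho) by nra.
      apply Rmult_le_reg_r with Om. lra.
      replace (2 * INR k1 * H * (22 / 10 * exp 1 * rho) / Om * Om) with (2 * INR k1 * H * (22 / 10 * exp 1 * rho)) by (field; lra).
      nra. }
  assert (HGpos : 0 < Cmod Gj) by (apply Cmod_gt_0; auto).
  assert (Hnpos : 0 < INR n) by (apply lt_0_INR; lia).
  assert (HL : Cmod Gj / INR n <= Cmod (lprod us (w j))).
  { apply Rmult_le_reg_r with (1 / Cmod Gj). apply Rdiv_lt_0_compat; lra.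
    replace (Cmod Gj / INR n * (1 / Cmod Gj)) with (1 / INR n) by (field; lra).
    replace (Cmod (lprod us (w j)) * (1 / Cmod Gj)) with (Cmod (lprod us (w j)) / Cmod Gj) by (field; lra).
    exact Hj. }
  pose proof (Hm_le j Hj1) as Hmj.
  pose proof (final_num k1 Hk1) as Hfn.
  assert (HG0sq : G0 ^ 2 = rho ^ (2 * k1) * ((22 / 10 * exp 1 / INR k1) ^ (2 * k1) * INR (Factorial.fact k1) ^ 2)).
  { unfold G0. replace (22 / 10 * exp 1 * rho / INR k1) with ((22 / 10 * exp 1 / INR k1) * rho) by (field; lra).
    rewrite !Rpow_mult_distr. replace (2 * k1)%nat with (k1 * 2)%nat by lia. rewrite !pow_mult. ring. }
  assert (Hprod_lb : m * G0 ^ 2 / INR n <= Cmod (a j) * Cmod (lprod us (w j)) * Cmod Gj).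
  { assert (Cmod Gj * Cmod Gj / INR n <= Cmod (lprod us (w j)) * Cmod Gj).
    { replace (Cmod Gj * Cmod Gj / INR n) with (Cmod Gj / INR n * Cmod Gj) by (field; lra).
      apply Rmult_le_compat_r; lra. }
    assert (G0 ^ 2 / INR n <= Cmod Gj * Cmod Gj / INR n).
    { unfold Rdiv. apply Rmult_le_compat_r. left; apply Rinv_0_lt_compat; lra. simpl. nra. }
    assert (0 <= G0 ^ 2 / INR n) by (apply Rmult_le_pos; [apply pow_le; auto| left; apply Rinv_0_lt_compat; lra]).
    replace (m * G0 ^ 2 / INR n) with (m * (G0 ^ 2 / INR n)) by (field; lra).
    rewrite Rmult_assoc. apply Rmult_le_compat; try lra. }
  assert (HK4 : 2 ^ K = 4 ^ k1).
  { unfold K. rewrite pow_mult. f_equal. lra. }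
  assert (Hfin : 2 * sigma * 4 ^ k1 <= m * G0 ^ 2 / INR n).
  { rewrite HG0sq. rewrite <- Hrho_pow.
    replace (m * (rho ^ (2 * k1) * ((22 / 10 * exp 1 / INR k1) ^ (2 * k1) * INR (Factorial.fact k1) ^ 2)) / INR n)
      with ((m * rho ^ (2 * k1)) * (((22 / 10 * exp 1 / INR k1) ^ (2 * k1) * INR (Factorial.fact k1) ^ 2) / INR n)) by (field; lra).
    replace (2 * (m * rho ^ (2 * k1)) * 4 ^ k1) with ((m * rho ^ (2 * k1)) * (2 * 4 ^ k1)) by ring.
    apply Rmult_le_compat_l. rewrite Hrho_pow; lra.
    apply Rmult_le_reg_r with (INR n). lra.
    replace ((22 / 10 * exp 1 / INR k1) ^ (2 * k1) * INR (Factorial.fact k1) ^ 2 / INR n * INR n)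
      with ((22 / 10 * exp 1 / INR k1) ^ (2 * k1) * INR (Factorial.fact k1) ^ 2) by (field; lra).
    replace (2 * 4 ^ k1 * INR n) with (2 * INR (k1 + 1) * 4 ^ k1).
    exact Hfn. rewrite plus_INR, Hn_k1. simpl (INR 1). ring. }
  assert (2 * sigma * lmod zs <= 2 * sigma * 4 ^ k1).
  { rewrite <- HK4. apply Rmult_le_compat_l; lra. }
  change (lmod (us ++ map w (rm j I))) with (lmod zs) in Hchain.
  lra.
Qed.

End Aux.

Theorem theorem2p1
  (n M : nat) (Om sigma : R) (a : nat -> Cx) (y : nat -> R) (W Y : nat -> Cx)
  (Hn : (2 <= n)%nat) (HM : (2 * n < M)%nat) (HOm : 0 < Om)
  (Ha : forall j, (1 <= j <= n)%nat -> a j <> C0)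
  (Hy_dist : forall p j, (1 <= p <= n)%nat -> (1 <= j <= n)%nat -> p <> j -> y p <> y j)
  (Hy_int : forall j, (1 <= j <= n)%nat ->
      - (INR n - 1) * PI / (2 * Om) <= y j <= (INR n - 1) * PI / (2 * Om))
  (HY : forall q, (1 <= q <= M)%nat -> Y q = Cadd (fourier n a y (omega_q Om M q)) (W q))
  (HW : forall q, (1 <= q <= M)%nat -> Cmod (W q) < sigma)
  (Hsep : forall p j, (1 <= p <= n)%nat -> (1 <= j <= n)%nat -> p <> j ->
      Rabs (y p - y j) >=
        4.4 * PI * exp 1 / Om * Rpower (sigma / mmin n a) (1 / (2 * INR n - 2))) :
  ~ (exists (k : nat) (ah : nat -> Cx) (yh : nat -> R),
        (k < n)%nat /\ admissible Om M Y sigma k ah yh).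
Proof.
  exact (Aux.main_aux n M Om sigma a y W Y Hn HM HOm Ha Hy_dist Hy_int HY HW Hsep).
Qed.
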